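(* Every $2$-tree decomposition $\mathcal{G}=(G;T_1,T_2)$ has a realisation in the plane $\mathbb{R}^2$.
   Context: A multi-graph is finite and loop-free, possibly with parallel edges. A $2$-tree decomposition is a tuple $(G;T_1,T_2)$ where $G$ is a multi-graph and $T_1,T_2$ are spanning trees of $G$ whose edge sets partition $E(G)$ (distinct parallel edges are distinct edges); the one-vertex edgeless graph with edgeless trees is included. Realisations: for $x\in\mathbb{R}^d$, $\|x\|_\infty=\max_i|x\cdot e_i|$. A framework $(G,p)$ in $\mathbb{R}^d$ consists of a multi-graph $G$ and an injective map $p:V(G)\to\mathbb{R}^d$. If $u,w$ are joined by exactly $t\ge1$ edges ($t\le d$), the pair $\{p(u),p(w)\}$ is well-positioned if there are exactly $t$ distinct indices $k\in\{1,\dots,d\}$ with $\|p(u)-p(w)\|_\infty=|(p(u)-p(w))\cdot e_k|$; these indices are the framework colours of the pair. $(G,p)$ is well-positioned if every adjacent pair is well-positioned; a framework colouring $\kappa_p:E(G)\to\{1,\dots,d\}$ then assigns to the $t$ edges between $u,w$ the $t$ framework colours of $\{p(u),p(w)\}$ bijectively. A realisation of a $d$-tree decomposition $(G;T_1,\dots,T_d)$ is a well-positioned framework $(G,p)$ in $\mathbb{R}^d$ such that for some framework colouring $\kappa_p$, $\kappa_p^{-1}(i)=E(T_i)$ for each $i$. *)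

(* Defs.v *)
From Stdlib Require Import Reals.
From mathcomp Require Import all_boot.
Set Implicit Arguments. Unset Strict Implicit. Unset Printing Implicit Defensive.

(* A multigraph: finite vertex type V, finite edge type E, each edge e
   having endpoints src e and dst e (parallel edges = distinct elements of E). *)
Section MultiGraph.
Variables (V E : finType) (src dst : E -> V).

Definition loopfree : Prop := forall e, src e != dst e.

Definition joins (e : E) (x y : V) : bool :=
  ((src e == x) && (dst e == y)) || ((src e == y) && (dst e == x)).

Definition edges_between (u w : V) : {set E} := [set e | joins e u w].
Definition mult (u w : V) : nat := #|edges_between u w|.

Definition sub_connected (T : {set E}) : Prop :=
  forall x y : V, connect (fun a b => [exists e in T, joins e a b]) x y.

Definition has_cycle (T : {set E}) : Prop :=
  exists (es : seq E) (vs : seq V),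
    [/\ 0 < size es, size vs = size es, uniq es && uniq vs,
        {subset es <= T} &
        forall i, i < size es -> forall (e0 : E) (v0 : V),
          joins (nth e0 es i) (nth v0 vs i) (nth v0 vs (i.+1 %% size es))].

Definition spanning_tree (T : {set E}) : Prop :=
  sub_connected T /\ ~ has_cycle T.

Definition tree_decomposition (d : nat) (T : 'I_d -> {set E}) : Prop :=
  [/\ loopfree,
      forall i, spanning_tree (T i) &
      forall e, exists! i, e \in T i].

Definition reqb (x y : R) : bool := if Req_dec_T x y then true else false.

Definition linf (d : nat) (x : 'I_d -> R) : R :=
  foldr Rmax R0 [seq Rabs (x i) | i <- enum 'I_d].

Definition fcols (d : nat) (p : V -> 'I_d -> R) (u w : V) : {set 'I_d} :=
  [set k : 'I_d | reqb (Rabs (Rminus (p u k) (p w k)))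
                       (linf (fun i => (Rminus (p u i) (p w i))))].

Definition well_positioned (d : nat) (p : V -> 'I_d -> R) : Prop :=
  forall u w, 0 < mult u w -> #|fcols p u w| = mult u w.

Definition framework_colouring (d : nat) (p : V -> 'I_d -> R)
  (kappa : E -> 'I_d) : Prop :=
  forall u w, 0 < mult u w ->
    {in edges_between u w &, injective kappa} /\
    kappa @: edges_between u w = fcols p u w.

Definition realisation (d : nat) (T : 'I_d -> {set E})
  (p : V -> 'I_d -> R) : Prop :=
  [/\ injective p, well_positioned p &
      exists kappa : E -> 'I_d, framework_colouring p kappa /\
        forall i e, kappa e = i <-> e \in T i].

End MultiGraph.

(* Main.v *)
Require Import Defs.
From Stdlib Require Import Reals.
From mathcomp Require Import all_boot.
From mathcomp Require Import zify.
From Stdlib Require Import Lra Psatz.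
Set Implicit Arguments. Unset Strict Implicit. Unset Printing Implicit Defensive.


Section Graph.
Variable V : finType.

Definition inL (L : seq (V * V)) : rel V :=
  fun x y => ((x, y) \in L) || ((y, x) \in L).

Lemma inL_sym L : symmetric (inL L).
Proof. by move=> x y; rewrite /inL orbC. Qed.

Lemma inL_cons p L x y :
  inL (p :: L) x y = ((x, y) == p) || ((y, x) == p) || inL L x y.
Proof. rewrite /inL !in_cons; by case: ((x,y) == p); case: ((y,x) == p); case: ((x,y) \in L). Qed.

Lemma connect_ind (r : rel V) (z : V) (P : V -> Prop) :
  P z -> (forall x y, r x y -> connect r y z -> P y -> P x) ->
  forall x, connect r x z -> P x.
Proof.
move=> Pz IH x /connectP [p]; elim: p x => [|y p IHp] x /=.
  by move=> _ <-.
move=> /andP [rxy pth] lst; apply: (IH x y rxy).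
  by apply/connectP; exists p.
exact: IHp.
Qed.

Lemma connect_mono (r r' : rel V) : (forall x y, r x y -> r' x y) ->
  forall x y, connect r x y -> connect r' x y.
Proof.
move=> H x y; apply: connect_sub => a b rab; apply: connect1; exact: H.
Qed.

Lemma csym (r : rel V) : symmetric r -> forall x y, connect r x y -> connect r y x.
Proof. by move=> s x y; rewrite (sym_connect_sym s). Qed.

Lemma connect_isol (r : rel V) v y : (forall z, ~~ r v z) -> connect r v y -> y = v.
Proof.
move=> iso /connectP [[|z p]] /=; first by move=> _ ->.
by rewrite (negbTE (iso z)).
Qed.

Lemma reroute (r r' : rel V) v y :
  symmetric r ->
  (forall x z, x != v -> z != v -> r x z -> r' x z) ->
  (forall z z', r v z -> r v z' -> connect r' z z') ->
  (forall z, r v z -> z != v) ->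
  y != v -> forall x, x != v -> connect r x y -> connect r' x y.
Proof.
move=> sym agr nb nbv yv.
pose P z := (z != v -> connect r' z y) /\ (z = v -> forall z', r v z' -> connect r' z' y).
suff H: forall x, connect r x y -> P x by move=> x xv /H [H1 _]; exact: H1.
apply: connect_ind.
  split => // yv'; by rewrite yv' eqxx in yv.
move=> x z rxz _ [Pz1 Pz2]; split.
  move=> xv; case: (eqVneq z v) => [zv | zv].
    apply: Pz2 => //; by rewrite -zv sym.
  apply: connect_trans (Pz1 zv); apply: connect1; exact: agr.
move=> xv z' rvz'; subst x.
apply: connect_trans (nb _ _ rvz' rxz) _; apply: Pz1; exact: nbv.
Qed.

Definition addE (r : rel V) (u1 u2 : V) : rel V :=
  fun x y => r x y || ((x == u1) && (y == u2)) || ((x == u2) && (y == u1)).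

Lemma addE_conn r u1 u2 x y : connect (addE r u1 u2) x y ->
  connect r x y \/ connect r x u1 \/ connect r x u2.
Proof.
move: x; apply: connect_ind; first by left.
move=> x z; rewrite /addE => /orP [/orP [rxz|H]|H] _.
- case=> [H|[H|H]]; [left|right;left|right;right]; apply: connect_trans H; exact: connect1.
- move: H => /andP [/eqP -> _] _; by right; left.
- move: H => /andP [/eqP -> _] _; by right; right.
Qed.

Lemma addE_conn2 r u1 u2 x y : symmetric r -> connect (addE r u1 u2) x y ->
  connect r x y \/ ((connect r x u1 \/ connect r x u2) /\ (connect r y u1 \/ connect r y u2)).
Proof.
move=> sym.
have symA : symmetric (addE r u1 u2).
  move=> a b; rewrite /addE sym; by case: (r b a); case: (a == u1); case: (a == u2); case: (b == u1); case: (b == u2).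
move=> H; case: (addE_conn H) => [H1|H1]; first by left.
have H': connect (addE r u1 u2) y x by rewrite (sym_connect_sym symA).

case: (addE_conn H') => [H2|H2].
  by left; rewrite (sym_connect_sym sym).
by right.
Qed.

End Graph.


Section Count.
Variable V : finType.
Implicit Types (L : seq (V * V)) (R S : {set V}).

Definition ends_in S L := forall p, p \in L -> (p.1 \in S) && (p.2 \in S).

Lemma inL_split L x y : inL L x y -> ((x, y) \in L) \/ ((y, x) \in L).
Proof. by case/orP; [left|right]. Qed.

Lemma conn_count L : forall R S, ends_in S L ->
  (forall x, x \in S -> exists2 r, r \in R & connect (inL L) x r) ->
  #|S| <= #|R| + size L.
Proof.
elim: L => [|[x0 y0] L IH] R S ends H /=.
  rewrite addn0; apply: subset_leq_card; apply/subsetP => x xS.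
  case: (H x xS) => r rR c.
  by rewrite -(connect_isol (r:=inL [::]) (v:=x) (y:=r)) //.
have ends' : ends_in S L by move=> p pL; apply: ends; rewrite in_cons pL orbT.
have /andP [x0S y0S] : (x0 \in S) && (y0 \in S) by exact: (ends (x0,y0) (mem_head _ _)).
pose r' := inL L.
pose P t := exists2 r, r \in R & connect r' t r.
have C : forall z r, r \in R -> connect (inL ((x0,y0) :: L)) z r -> P z \/ P x0 \/ P y0.
  move=> z r rR; move: z; apply: connect_ind.
    by left; exists r.
  move=> x z1; rewrite inL_cons => /orP [/orP [/eqP [-> ->]|/eqP [-> ->]]|e] _ IHz.
  - case: IHz => [Pz|[Pz|Pz]]; by [right;right| right; left | right; right].
  - case: IHz => [Pz|[Pz|Pz]]; by [right;left| right; left | right; right].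
  - case: IHz => [[r1 r1R c]|Hd]; last by right.
    by left; exists r1 => //; apply: connect_trans c; apply: connect1.
have D : forall z r, r \in R -> connect (inL ((x0,y0) :: L)) z r ->
    P z \/ connect r' z x0 \/ connect r' z y0.
  move=> z r rR; move: z; apply: connect_ind.
    by left; exists r.
  move=> x z1; rewrite inL_cons => /orP [/orP [/eqP [-> ->]|/eqP [-> ->]]|e] _ IHz.
  - by right; left.
  - by right; right.
  - have e1 : connect r' x z1 by apply: connect1.
    case: IHz => [[r1 r1R c]|[c|c]].
    + by left; exists r1 => //; apply: connect_trans c.
    + by right; left; apply: connect_trans c.
    + by right; right; apply: connect_trans c.
have [r0 r0R c0] := H x0 x0S.
have Hxy : P x0 \/ P y0 by case: (C x0 r0 r0R c0) => [|[|]]; tauto.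
case: Hxy => [[rx rxR cx]|[ry ryR cy]].
- apply: leq_trans (IH (y0 |: R) S ends' _) _.
    move=> z zS; have [r1 r1R c1] := H z zS.
    case: (D z r1 r1R c1) => [[r2 r2R c2]|[c2|c2]].
    + by exists r2 => //; rewrite in_setU1 r2R orbT.
    + by exists rx; [rewrite in_setU1 rxR orbT | apply: connect_trans cx].
    + by exists y0; [rewrite in_setU1 eqxx|].
  rewrite cardsU1 /=; have := leq_b1 (y0 \notin R); lia.
- apply: leq_trans (IH (x0 |: R) S ends' _) _.
    move=> z zS; have [r1 r1R c1] := H z zS.
    case: (D z r1 r1R c1) => [[r2 r2R c2]|[c2|c2]].
    + by exists r2 => //; rewrite in_setU1 r2R orbT.
    + by exists x0; [rewrite in_setU1 eqxx|].
    + by exists ry; [rewrite in_setU1 ryR orbT | apply: connect_trans cy].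
  rewrite cardsU1 /=; have := leq_b1 (x0 \notin R); lia.
Qed.

Definition connS S L := forall x y, x \in S -> y \in S -> connect (inL L) x y.

Lemma conn_count1 S L s0 : ends_in S L -> connS S L -> s0 \in S -> #|S| <= 1 + size L.
Proof.
move=> e c s0S; have := conn_count (R := [set s0]) e.
rewrite cards1; apply => x xS; exists s0; [by rewrite in_set1 | exact: c].
Qed.

Lemma tree_bridge S L q : ends_in S L -> connS S L -> size L + 1 = #|S| ->
  q \in L -> connect (inL (rem q L)) q.1 q.2 -> False.
Proof.
move=> e c sz qL cq.
have /andP [q1S q2S] := e q qL.
have e' : ends_in S (rem q L) by move=> p /mem_rem pL; exact: e.
have c' : connS S (rem q L).
  move=> x y xS yS; apply: (connect_sub _ (c x y xS yS)) => a b /inL_split [H|H].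
  - case: (eqVneq (a, b) q) => [E|N].
      by subst q.
    by apply: connect1; rewrite /inL (rem_mem N H).
  - case: (eqVneq (b, a) q) => [E|N].
      by subst q; apply: csym => //; exact: inL_sym.
    by apply: connect1; rewrite /inL (rem_mem N H) orbT.
have := conn_count1 e' c' q1S; have hs : 0 < size L by move: qL; case: (L).
rewrite (size_rem qL) -sz.
move: hs; case: (size L) => // n _ /=; lia.
Qed.

Fixpoint forestL L : Prop :=
  if L is p :: L' then ~ connect (inL L') p.1 p.2 /\ forestL L' else True.

Lemma forest_count L : forestL L -> exists R : {set V},
  #|R| + size L <= #|V| /\ forall x, exists2 r, r \in R & connect (inL L) x r.
Proof.
elim: L => [|p L IH] /=.
  move=> _; exists setT; rewrite cardsT addn0; split => // x; by exists x.
move=> [br fL]; have [R' [cR' HR']] := IH fL.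
have [rx rxR cx] := HR' p.1; have [ry ryR cy] := HR' p.2.
have nxy : rx != ry.
  apply/eqP => E; apply: br; apply: connect_trans cx _; rewrite E.
  by apply: csym => //; exact: inL_sym.
have mono : forall a b, connect (inL L) a b -> connect (inL (p :: L)) a b.
  apply: connect_mono => a b; rewrite inL_cons => ->; by rewrite orbT.
exists (R' :\ ry); split.
  move: cR'; rewrite (cardsD1 ry R') ryR /=; lia.
move=> z; have [r rR c] := HR' z.
case: (eqVneq r ry) => [E|N].
  exists rx; first by rewrite in_setD1 nxy.
  apply: connect_trans (mono _ _ c) _; rewrite E.
  apply: (connect_trans (y := p.2)).
    apply: mono; apply: csym => //; exact: inL_sym.
  apply: (connect_trans (y := p.1) _ (mono _ _ cx)).
  apply: connect1; rewrite inL_cons; case: p {br cx cy mono c} => a b /=.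
  by rewrite eqxx orbT.
exists r; first by rewrite in_setD1 N.
exact: mono.
Qed.

Lemma forest_size L : forestL L -> 0 < #|V| -> size L + 1 <= #|V|.
Proof.
move=> fL /card_gt0P [x _]; have [R [cR HR]] := forest_count fL.
have [r rR _] := HR x.
apply: leq_trans cR; rewrite addnC leq_add2r.
by apply/card_gt0P; exists r.
Qed.

End Count.


Section Reduce.
Variable V : finType.
Implicit Types (L : seq (V * V)) (R S : {set V}).

Definition loopless L := forall p, p \in L -> p.1 != p.2.

Record cfg S L1 L2 : Prop := Cfg {
  cf_e1 : ends_in S L1; cf_e2 : ends_in S L2;
  cf_l1 : loopless L1; cf_l2 : loopless L2;
  cf_c1 : connS S L1; cf_c2 : connS S L2;
  cf_s1 : size L1 + 1 = #|S|; cf_s2 : size L2 + 1 = #|S| }.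

Lemma cfg_swap S L1 L2 : cfg S L1 L2 -> cfg S L2 L1.
Proof. by case=> *; constructor. Qed.

Definition inc (v : V) (p : V * V) := (p.1 == v) || (p.2 == v).
Definition deg L v := count (inc v) L.
Definition rest v L := [seq p <- L | ~~ inc v p].

Lemma sum_eq1 S (a : V) : a \in S -> \sum_(v in S) (a == v) = 1.
Proof.
move=> aS; rewrite (bigD1 a) //= eqxx big1 // => i /andP [_ H].
by rewrite eq_sym (negbTE H).
Qed.

Lemma sum_deg S L : ends_in S L -> loopless L ->
  \sum_(v in S) deg L v = 2 * size L.
Proof.
elim: L => [|p L IH] e l.
  by rewrite big1.
have e' : ends_in S L by move=> q qL; apply: e; rewrite in_cons qL orbT.
have l' : loopless L by move=> q qL; apply: l; rewrite in_cons qL orbT.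
have /andP [p1S p2S] := e p (mem_head _ _).
have np := l p (mem_head _ _).
rewrite /deg /=.
under eq_bigr do rewrite /inc.
have -> : \sum_(i in S) (((p.1 == i) || (p.2 == i)) + count (inc i) L) =
   \sum_(i in S) ((p.1 == i) + (p.2 == i) + count (inc i) L).
  apply: eq_bigr => i _; case: (eqVneq p.1 i) => [E|//].
  by rewrite -E eq_sym (negbTE np).
rewrite big_split big_split /= sum_eq1 // sum_eq1 //.
have := IH e' l'; rewrite /deg => ->; rewrite mulnS; lia.
Qed.

Lemma deg_pos S L v : ends_in S L -> connS S L -> v \in S -> 1 < #|S| -> 0 < deg L v.
Proof.
move=> e c vS n1.
have : 0 < #|S :\ v| by move: n1; rewrite (cardsD1 v S) vS; lia.
case/card_gt0P => s; rewrite in_setD1 => /andP [sv sS].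
have /connectP [p] := c v s vS sS.
case: p => [|z p] /=; first by move=> _ E; rewrite E eqxx in sv.
case/andP => /inL_split H _ _; rewrite /deg -has_count; apply/hasP.
by case: H => H; [exists (v, z) | exists (z, v)]; rewrite // /inc /= eqxx ?orbT.
Qed.

Lemma low_deg S L1 L2 : cfg S L1 L2 -> 1 < #|S| ->
  exists2 v, v \in S & [/\ deg L1 v + deg L2 v <= 3, 0 < deg L1 v & 0 < deg L2 v].
Proof.
move=> C n1.
case: (boolP [exists v in S, deg L1 v + deg L2 v <= 3]).
  case/existsP => v /andP [vS d]; exists v => //; split => //.
    exact: (deg_pos (cf_e1 C) (cf_c1 C)).
  exact: (deg_pos (cf_e2 C) (cf_c2 C)).
rewrite negb_exists => /forallP H.
have : \sum_(v in S) 4 <= \sum_(v in S) (deg L1 v + deg L2 v).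
  apply: leq_sum => v vS; have := H v; rewrite vS /=; lia.
rewrite big_split /= sum_deg ?sum_deg; try by case: C.
rewrite sum_nat_const.
have := cf_s1 C; have := cf_s2 C; lia.
Qed.

Lemma inL_rest v L x y : x != v -> y != v -> inL (rest v L) x y = inL L x y.
Proof.
move=> xv yv; rewrite /inL /rest !mem_filter /inc /=.
by rewrite (negbTE xv) (negbTE yv).
Qed.

Lemma inL_rest_v v L y : inL (rest v L) v y = false.
Proof. by rewrite /inL /rest !mem_filter /inc /= eqxx ?orbT. Qed.

Lemma inL_rest_v' v L y : inL (rest v L) y v = false.
Proof. by rewrite inL_sym inL_rest_v. Qed.

Lemma size_rest v L : size (rest v L) + deg L v = size L.
Proof. by rewrite /rest size_filter /deg addnC (count_predC (inc v)). Qed.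

Lemma ends_rest S L v : ends_in S L -> ends_in (S :\ v) (rest v L).
Proof.
move=> e p; rewrite mem_filter => /andP [ni pL].
have /andP [p1 p2] := e p pL; move: ni; rewrite /inc negb_or => /andP [n1 n2].
by rewrite !in_setD1 n1 n2 p1 p2.
Qed.

Lemma loopless_rest L v : loopless L -> loopless (rest v L).
Proof. by move=> l p; rewrite mem_filter => /andP [_ /l]. Qed.

Lemma inL_loop L v : loopless L -> ~~ inL L v v.
Proof. by move=> l; apply/negP => /inL_split [H|H]; have := l _ H; rewrite eqxx. Qed.

Lemma deg1_nb L v : deg L v = 1 ->
  exists u, (forall y, inL L v y -> y = u) /\ inL L v u.
Proof.
move=> d; have : size [seq p <- L | inc v p] = 1 by rewrite size_filter.
case E: [seq p <- L | inc v p] => [|p [|]] //= _.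
have pL : p \in [seq p <- L | inc v p] by rewrite E mem_head.
move: (pL); rewrite mem_filter => /andP [ip pL'].
exists (if p.1 == v then p.2 else p.1); split.
  move=> y /inL_split [H|H].
  - have : (v, y) \in [seq p <- L | inc v p] by rewrite mem_filter /inc eqxx.
    by rewrite E in_cons in_nil orbF => /eqP <- /=; rewrite eqxx.
  - have : (y, v) \in [seq p <- L | inc v p] by rewrite mem_filter /inc eqxx orbT H.
    rewrite E in_cons in_nil orbF => /eqP <- /=; by case: eqP.
case: (eqVneq p.1 v) => [E1|N1]; rewrite /inL.
  by move: pL'; case: p {E pL ip} E1 => a b /= -> H; rewrite H.
move: ip; rewrite /inc (negbTE N1) /= => /eqP E2.
by move: pL'; case: p {E pL} N1 E2 => a b /= N1 -> H; rewrite ?(negbTE N1) H ?orbT.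
Qed.

Lemma deg2_nb L v : deg L v = 2 ->
  exists u1 u2, [/\ forall y, inL L v y -> y = u1 \/ y = u2, inL L v u1 & inL L v u2].
Proof.
move=> d; have : size [seq p <- L | inc v p] = 2 by rewrite size_filter.
case E: [seq p <- L | inc v p] => [|p [|q [|]]] //= _.
have key : forall p, p \in [seq p <- L | inc v p] ->
   (forall y, p = (v, y) \/ p = (y, v) -> y = (if p.1 == v then p.2 else p.1)) /\
   inL L v (if p.1 == v then p.2 else p.1).
  move=> r; rewrite mem_filter => /andP [ir rL]; split.
    by move=> y [->|->] /=; rewrite ?eqxx //; case: eqP.
  case: (eqVneq r.1 v) => [E1|N1]; rewrite /inL.
    by move: rL; case: r {ir} E1 => a b /= -> H; rewrite H.
  move: ir; rewrite /inc (negbTE N1) /= => /eqP E2.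
  by move: rL; case: r N1 E2 => a b /= N1 -> H; rewrite ?(negbTE N1) H ?orbT.
have pin : p \in [seq p <- L | inc v p] by rewrite E mem_head.
have qin : q \in [seq p <- L | inc v p] by rewrite E !in_cons eqxx orbT.
exists (if p.1 == v then p.2 else p.1), (if q.1 == v then q.2 else q.1).
split; [|exact: (key p pin).2|exact: (key q qin).2].
move=> y /inL_split [H|H].
- have : (v, y) \in [seq p <- L | inc v p] by rewrite mem_filter /inc eqxx.
  rewrite E !in_cons in_nil orbF => /orP [/eqP|/eqP] Ev.
    by left; apply: (key p pin).1; left.
  by right; apply: (key q qin).1; left.
- have : (y, v) \in [seq p <- L | inc v p] by rewrite mem_filter /inc eqxx orbT H.
  rewrite E !in_cons in_nil orbF => /orP [/eqP|/eqP] Ev.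
    by left; apply: (key p pin).1; right.
  by right; apply: (key q qin).1; right.
Qed.

Lemma card_del S v : v \in S -> #|S :\ v| + 1 = #|S|.
Proof. by move=> vS; rewrite (cardsD1 v S) vS addnC. Qed.

Lemma conn_rest S L L' v :
  connS S L -> loopless L -> v \in S ->
  (forall x z, x != v -> z != v -> inL L x z -> inL L' x z) ->
  (forall z z', inL L v z -> inL L v z' -> connect (inL L') z z') ->
  connS (S :\ v) L'.
Proof.
move=> c l vS agr nb x y; rewrite !in_setD1 => /andP [xv xS] /andP [yv yS].
apply: (reroute (r := inL L) (v := v) (inL_sym L) agr nb _ yv xv (c x y xS yS)).
move=> z Hz; apply/eqP => E; subst z; by have := (inL_loop v l); rewrite Hz.
Qed.

Lemma cfg_ext0 S L1 L2 v : cfg S L1 L2 -> v \in S -> deg L1 v = 1 -> deg L2 v = 1 ->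
  cfg (S :\ v) (rest v L1) (rest v L2).
Proof.
move=> C vS d1 d2; constructor.
- exact: ends_rest (cf_e1 C).
- exact: ends_rest (cf_e2 C).
- exact: loopless_rest (cf_l1 C).
- exact: loopless_rest (cf_l2 C).
- apply: conn_rest (cf_c1 C) (cf_l1 C) vS _ _.
    by move=> x z xv zv; rewrite inL_rest.
  have [u [Hu _]] := deg1_nb d1.
  by move=> z z' /Hu -> /Hu ->.
- apply: conn_rest (cf_c2 C) (cf_l2 C) vS _ _.
    by move=> x z xv zv; rewrite inL_rest.
  have [u [Hu _]] := deg1_nb d2.
  by move=> z z' /Hu -> /Hu ->.
- have := size_rest v L1; have := cf_s1 C; have := card_del vS; lia.
- have := size_rest v L2; have := cf_s2 C; have := card_del vS; lia.
Qed.

Lemma deg2_distinct S L v u1 u2 : ends_in S L -> loopless L -> connS S L ->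
  size L + 1 = #|S| -> v \in S -> deg L v = 2 ->
  (forall y, inL L v y -> y = u1 \/ y = u2) -> u1 != u2.
Proof.
move=> e l c sz vS d nb; apply/eqP => E; subst u2.
have c' : connS (S :\ v) (rest v L).
  apply: conn_rest c l vS _ _.
    by move=> x z xv zv; rewrite inL_rest.
  by move=> z z' /nb [] -> /nb [] ->.
have : 0 < #|S :\ v|.
  have [s] : exists s, s \in S :\ v.
    have := cf_e1; move: d; rewrite /deg -[2]/(0.+2).
    case: (boolP (has (inc v) L)) => [/hasP [p pL ip] _ _|]; last by rewrite has_count; case: count.
    have /andP [p1 p2] := e p pL; have pn := l p pL.
    move: ip; rewrite /inc; case: (eqVneq p.1 v) => [E1 _|N1 _].
      by exists p.2; rewrite in_setD1 p2 -E1 eq_sym pn.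
    by exists p.1; rewrite in_setD1 p1 N1.
  by move=> sS; apply/card_gt0P; exists s.
case/card_gt0P => s sS.
have := conn_count1 (ends_rest (v:=v) e) c' sS.
have := size_rest v L; have := card_del vS; lia.
Qed.

Lemma cfg_ext1 S L1 L2 v u1 u2 : cfg S L1 L2 -> v \in S ->
  deg L1 v = 2 -> deg L2 v = 1 ->
  (forall y, inL L1 v y -> y = u1 \/ y = u2) -> inL L1 v u1 -> inL L1 v u2 ->
  cfg (S :\ v) ((u1, u2) :: rest v L1) (rest v L2).
Proof.
move=> C vS d1 d2 nb i1 i2.
have n12 : u1 != u2 := deg2_distinct (cf_e1 C) (cf_l1 C) (cf_c1 C) (cf_s1 C) vS d1 nb.
have u1S : u1 \in S :\ v.
  case/inL_split: i1 => H; have /andP [a b] := cf_e1 C H; have := cf_l1 C H;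
    by rewrite in_setD1 /= ?a ?b ?andbT // eq_sym.
have u2S : u2 \in S :\ v.
  case/inL_split: i2 => H; have /andP [a b] := cf_e1 C H; have := cf_l1 C H;
    by rewrite in_setD1 /= ?a ?b ?andbT // eq_sym.
constructor.
- move=> p; rewrite in_cons => /orP [/eqP -> /=|]; first by rewrite u1S u2S.
  exact: ends_rest (cf_e1 C) p.
- exact: ends_rest (cf_e2 C).
- move=> p; rewrite in_cons => /orP [/eqP -> //|]; exact: loopless_rest (cf_l1 C) p.
- exact: loopless_rest (cf_l2 C).
- apply: conn_rest (cf_c1 C) (cf_l1 C) vS _ _.
    by move=> x z xv zv; rewrite inL_cons inL_rest // => ->; rewrite orbT.
  have h : inL ((u1, u2) :: rest v L1) u1 u2 by rewrite inL_cons eqxx.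
  have h' : inL ((u1, u2) :: rest v L1) u2 u1 by rewrite inL_sym.
  by move=> z z' /nb [] -> /nb [] ->; rewrite ?connect0 //; apply: connect1.
- apply: conn_rest (cf_c2 C) (cf_l2 C) vS _ _.
    by move=> x z xv zv; rewrite inL_rest.
  have [u [Hu _]] := deg1_nb d2.
  by move=> z z' /Hu -> /Hu ->.
- have := size_rest v L1; have := cf_s1 C; have := card_del vS; rewrite /=; lia.
- have := size_rest v L2; have := cf_s2 C; have := card_del vS; lia.
Qed.

End Reduce.



Section Realis.
Variable V : finType.
Implicit Types (L : seq (V * V)) (R S : {set V}).
Local Open Scope R_scope.

Definition dbl L1 L2 (sg : rel V) : rel V := fun x y => [&& inL L1 x y, inL L2 x y & sg x y].
Definition nsg (sg : rel V) : rel V := fun x y => ~~ sg x y.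

Record realis S L1 L2 (sg : rel V) (a b : V -> R) : Prop := Real {
  re_inj : forall x y, x \in S -> y \in S -> a x = a y -> b x = b y -> x = y;
  re_s1 : forall x y, inL L1 x y -> ~~ inL L2 x y -> 0 < (a x - a y) * (b x - b y);
  re_s2 : forall x y, inL L2 x y -> ~~ inL L1 x y -> (a x - a y) * (b x - b y) < 0;
  re_tA : forall x y, x \in S -> y \in S -> (a x = a y <-> connect (dbl L1 L2 sg) x y);
  re_tB : forall x y, x \in S -> y \in S -> (b x = b y <-> connect (dbl L1 L2 (nsg sg)) x y) }.

Lemma dbl_sym L1 L2 sg : symmetric sg -> symmetric (dbl L1 L2 sg).
Proof. by move=> s x y; rewrite /dbl inL_sym (inL_sym L2) s. Qed.

Lemma nsg_sym sg : symmetric sg -> symmetric (nsg sg).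
Proof. by move=> s x y; rewrite /nsg s. Qed.

Lemma realis_eqsg S L1 L2 sg sg' a b : sg =2 sg' -> realis S L1 L2 sg a b -> realis S L1 L2 sg' a b.
Proof.
move=> E [i s1 s2 tA tB]; constructor; [exact: i|exact: s1|exact: s2| |].
- move=> x y xS yS; rewrite tA // (eq_connect (e' := dbl L1 L2 sg')) // => p q; by rewrite /dbl E.
- move=> x y xS yS; rewrite tB // (eq_connect (e' := dbl L1 L2 (nsg sg'))) // => p q; by rewrite /dbl /nsg E.
Qed.

Lemma realis_ab S L1 L2 sg a b : realis S L1 L2 sg a b -> realis S L1 L2 (nsg sg) b a.
Proof.
move=> [i s1 s2 tA tB]; constructor.
- by move=> x y xS yS H1 H2; apply: i.
- by move=> x y H1 H2; rewrite Rmult_comm; apply: s1.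
- by move=> x y H1 H2; rewrite Rmult_comm; apply: s2.
- exact: tB.
- move=> x y xS yS; rewrite tA // (eq_connect (e' := dbl L1 L2 (nsg (nsg sg)))) // => p q.
  by rewrite /dbl /nsg negbK.
Qed.

Lemma realis_tr S L1 L2 sg a b : realis S L2 L1 sg a b -> realis S L1 L2 sg a (fun z => - b z).
Proof.
have E : forall sg', dbl L2 L1 sg' =2 dbl L1 L2 sg'.
  by move=> sg' x y; rewrite /dbl andbA [inL L2 x y && _]andbC -andbA.
move=> [i s1 s2 tA tB]; constructor.
- move=> x y xS yS H1 H2; apply: i => //; lra.
- move=> x y H1 H2; have := s2 x y H1 H2; nra.
- move=> x y H1 H2; have := s1 x y H1 H2; nra.
- by move=> x y xS yS; rewrite tA // (eq_connect (E sg)).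
- move=> x y xS yS; rewrite -(eq_connect (E (nsg sg))) -tB //; split; lra.
Qed.

Lemma conn_pend (r r' : rel V) v u : symmetric r -> symmetric r' ->
  (forall x y, x != v -> y != v -> r x y = r' x y) -> (forall y, r' v y = false) ->
  (forall y, r v y -> y = u) -> u != v ->
  (forall x y, x != v -> y != v -> (connect r x y <-> connect r' x y)) /\
  (forall y, y != v -> (connect r v y <-> (r v u /\ connect r' u y))).
Proof.
move=> sr sr' agr r'v nb uv.
have A : forall x y, x != v -> y != v -> (connect r x y <-> connect r' x y).
  move=> x y xv yv; split.
    apply: (reroute sr _ _ _ yv xv).
    - by move=> p q pv qv; rewrite agr.
    - by move=> z z' /nb -> /nb ->.
    - by move=> z /nb ->.
  move: x xv; rewrite -/(_ -> _).
  suff H : forall x, connect r' x y -> x != v -> connect r x y by move=> x xv /H; apply.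
  apply: connect_ind => // x z rxz _ IH xv.
  have zv : z != v by apply/eqP => E; subst z; by rewrite sr' r'v in rxz.
  by apply: connect_trans (IH zv); apply: connect1; rewrite agr.
split => // y yv; split.
  case/connectP => [[|z p]] /=; first by move=> _ E; rewrite -E eqxx in yv.
  case/andP => rvz pth lst; have E := nb z rvz; subst z; split => //.
  by apply/(A _ _ uv yv)/connectP; exists p.
move=> [rvu c]; apply: connect_trans (connect1 rvu) _; exact/(A _ _ uv yv).
Qed.

Lemma ext_tie S L1 L2 sg v u (a : V -> R) av :
  symmetric sg -> v \in S -> u \in S :\ v ->
  (forall x y, x \in S :\ v -> y \in S :\ v -> (a x = a y <-> connect (dbl (rest v L1) (rest v L2) sg) x y)) ->
  (forall y, inL L1 v y && inL L2 v y -> y = u) ->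
  (forall y, y \in S :\ v -> (av = a y <-> dbl L1 L2 sg v u /\ a u = a y)) ->
  forall x y, x \in S -> y \in S ->
   ((if x == v then av else a x) = (if y == v then av else a y) <-> connect (dbl L1 L2 sg) x y).
Proof.
move=> ssg vS uS tA nb loc.
have uv : u != v by move: uS; rewrite in_setD1 => /andP [].
have agr : forall x y, x != v -> y != v -> dbl L1 L2 sg x y = dbl (rest v L1) (rest v L2) sg x y.
  by move=> x y xv yv; rewrite /dbl !inL_rest.
have r'v : forall y, dbl (rest v L1) (rest v L2) sg v y = false by move=> y; rewrite /dbl inL_rest_v.
have nb' : forall y, dbl L1 L2 sg v y -> y = u.
  by move=> y; rewrite /dbl => /and3P [H1 H2 _]; apply: nb; rewrite H1.
have [PA PB] := conn_pend (dbl_sym L1 L2 ssg) (dbl_sym (rest v L1) (rest v L2) ssg) agr r'v nb' uv.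
have sy := sym_connect_sym (dbl_sym L1 L2 ssg).
have yS' : forall y, y \in S -> y != v -> y \in S :\ v by move=> y yS yv; rewrite in_setD1 yv.
move=> x y xS yS; case: (eqVneq x v) => [->|xv]; case: (eqVneq y v) => [->|yv].
- by split => // _; exact: connect0.
- rewrite (loc y (yS' y yS yv)) (PB y yv) (tA u y uS (yS' y yS yv)) //.
- rewrite (sy x v); have L := loc x (yS' x xS xv); have P := PB x xv.
  have T := tA u x uS (yS' x xS xv).
  split => [E|c].
    by apply/P; have [H1 H2] := (proj1 L (esym E)); split => //; apply/T.
  have [H1 H2] := proj1 P c; symmetry; apply/L; split => //; exact/T.
- rewrite (tA x y (yS' x xS xv) (yS' y yS yv)); exact: iff_sym (PA _ _ xv yv).
Qed.


End Realis.


Section Ext.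
Variable V : finType.
Implicit Types (L : seq (V * V)) (R S : {set V}).
Local Open Scope R_scope.

Lemma realis_ext S L1 L2 sg v u (a b : V -> R) av bv :
  symmetric sg -> v \in S -> u \in S :\ v -> loopless L1 -> loopless L2 ->
  realis (S :\ v) (rest v L1) (rest v L2) sg a b ->
  (forall y, inL L1 v y && inL L2 v y -> y = u) ->
  (forall y, y \in S :\ v -> av = a y -> bv = b y -> False) ->
  (forall y, inL L1 v y -> ~~ inL L2 v y -> 0 < (av - a y) * (bv - b y)) ->
  (forall y, inL L2 v y -> ~~ inL L1 v y -> (av - a y) * (bv - b y) < 0) ->
  (forall y, y \in S :\ v -> (av = a y <-> dbl L1 L2 sg v u /\ a u = a y)) ->
  (forall y, y \in S :\ v -> (bv = b y <-> dbl L1 L2 (nsg sg) v u /\ b u = b y)) ->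
  realis S L1 L2 sg (fun z => if z == v then av else a z) (fun z => if z == v then bv else b z).
Proof.
move=> ssg vS uS l1 l2 RR nb linj ls1 ls2 ltA ltB.
have yS' : forall y, y \in S -> y != v -> y \in S :\ v by move=> y yS yv; rewrite in_setD1 yv.
constructor.
- move=> x y xS yS; case: (eqVneq x v) => [->|xv]; case: (eqVneq y v) => [->|yv] //.
  + by move=> E1 E2; case: (linj y (yS' y yS yv) E1 E2).
  + by move=> E1 E2; case: (linj x (yS' x xS xv) (esym E1) (esym E2)).
  + exact: (re_inj RR (yS' x xS xv) (yS' y yS yv)).
- move=> x y H1 H2; case: (eqVneq x v) => [E|xv]; case: (eqVneq y v) => [E'|yv].
  + by subst x y; move: H1; rewrite (negbTE (inL_loop v l1)).
  + by subst x; apply: ls1.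
  + subst y; have := ls1 x; rewrite !(inL_sym _ v) => /(_ H1 H2); nra.
  + by apply: (re_s1 RR); rewrite inL_rest.
- move=> x y H1 H2; case: (eqVneq x v) => [E|xv]; case: (eqVneq y v) => [E'|yv].
  + by subst x y; move: H1; rewrite (negbTE (inL_loop v l2)).
  + by subst x; apply: ls2.
  + subst y; have := ls2 x; rewrite !(inL_sym _ v) => /(_ H1 H2); nra.
  + by apply: (re_s2 RR); rewrite inL_rest.
- exact: (ext_tie ssg vS uS (re_tA RR) nb ltA).
- exact: (ext_tie (nsg_sym ssg) vS uS (re_tB RR) nb ltB).
Qed.

End Ext.


Section Place.
Variable V : finType.
Local Open Scope R_scope.

Lemma pick_seq (f : V -> R) (s : seq V) : forall lo hi, lo < hi ->
  exists t, (lo < t < hi) /\ forall y, y \in s -> t <> f y.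
Proof.
elim: s => [|y s IH] lo hi lh.
  by exists ((lo + hi) / 2); split => //; lra.
have [t [[h1 h2] H]] := IH lo hi lh.
case: (Req_dec t (f y)) => E.
  have [t' [[h1' h2'] H']] := IH lo t h1.
  exists t'; split; first lra.
  move=> z; rewrite in_cons => /orP [/eqP ->|zs]; [lra|exact: H'].
exists t; split => // z; rewrite in_cons => /orP [/eqP ->|zs] //; exact: H.
Qed.

Lemma pick (f : V -> R) (A : {set V}) lo hi : lo < hi ->
  exists t, (lo < t < hi) /\ forall y, y \in A -> t <> f y.
Proof.
move=> lh; have [t [h H]] := pick_seq f (enum A) lh.
by exists t; split => // y yA; apply: H; rewrite mem_enum.
Qed.

Lemma pick_gt (f : V -> R) (A : {set V}) lo :
  exists t, lo < t /\ forall y, y \in A -> t <> f y.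
Proof. have [t [[h1 _] H]] := pick f A (Rlt_plus_1 lo); by exists t. Qed.

Lemma pick_lt (f : V -> R) (A : {set V}) hi :
  exists t, t < hi /\ forall y, y \in A -> t <> f y.
Proof.
have h : hi - 1 < hi by lra.
have [t [[_ h2] H]] := pick f A h; by exists t.
Qed.

Definition avoid (a b : V -> R) (A : {set V}) (av bv : R) :=
  (forall y, y \in A -> av <> a y) /\ (forall y, y \in A -> bv <> b y).

Ltac pkA f A lo hi := let t := fresh "av" in let h := fresh "ha" in let H := fresh "Ha" in
  have [t [h H]] := pick f A (lo:=lo) (hi:=hi) ltac:(lra).

(* 0-extension: comparable to u, incomparable to w *)
Lemma place0 (a b : V -> R) (A : {set V}) au bu aw bw : (au <> aw \/ bu <> bw) ->
  exists av bv, [/\ avoid a b A av bv, 0 < (av - au) * (bv - bu) & (av - aw) * (bv - bw) < 0].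
Proof.
move=> neq.
case: (Rtotal_order au aw) => [h|[h|h]].
- have [av [hav Hav]] := pick a A h.
  have [bv [hbv Hbv]] := pick_gt b A (Rmax bu bw).
  have := Rmax_l bu bw; have := Rmax_r bu bw => m1 m2.
  exists av, bv; split => //; nra.
- subst aw; case: neq => [//|neq].
  case: (Rtotal_order bu bw) => [h|[h|h]]; last 2 first.
  + by [].
  + have [bv [hbv Hbv]] := pick b A h.
    have [av [hav Hav]] := pick_lt a A au.
    exists av, bv; split => //; nra.
  + have [bv [hbv Hbv]] := pick b A h.
    have [av [hav Hav]] := pick_gt a A au.
    exists av, bv; split => //; nra.
- have [av [hav Hav]] := pick a A h.
  have [bv [hbv Hbv]] := pick_lt b A (Rmin bu bw).
  have := Rmin_l bu bw; have := Rmin_r bu bw => m1 m2.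
  exists av, bv; split => //; nra.
Qed.

End Place.


Section Place1.
Variable V : finType.
Local Open Scope R_scope.

Lemma place1A_aux (a b : V -> R) (A : {set V}) a1 b1 a2 b2 aw bw :
  a1 < a2 -> b1 < b2 -> (a1 <> aw \/ b1 <> bw) -> (a2 <> aw \/ b2 <> bw) ->
  exists av bv, [/\ avoid a b A av bv, 0 < (av - a1) * (bv - b1),
     0 < (av - a2) * (bv - b2) & (av - aw) * (bv - bw) < 0].
Proof.
move=> ha hb n1 n2.
case: (Rlt_le_dec bw b1) => h1.
  have [bv [hbv Hbv]] := pick b A h1.
  have [av [hav Hav]] := pick_lt a A (Rmin a1 aw).
  have := Rmin_l a1 aw; have := Rmin_r a1 aw => m1 m2.
  exists av, bv; split => //; nra.
case: (Rlt_le_dec aw a1) => h2.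
  have [av [hav Hav]] := pick a A h2.
  have [bv [hbv Hbv]] := pick_lt b A (Rmin b1 bw).
  have := Rmin_l b1 bw; have := Rmin_r b1 bw => m1 m2.
  exists av, bv; split => //; nra.
case: (Rlt_le_dec a2 aw) => h3.
  have [av [hav Hav]] := pick a A h3.
  have [bv [hbv Hbv]] := pick_gt b A (Rmax b2 bw).
  have := Rmax_l b2 bw; have := Rmax_r b2 bw => m1 m2.
  exists av, bv; split => //; nra.
case: (Rlt_le_dec b2 bw) => h4.
  have [bv [hbv Hbv]] := pick b A h4.
  have [av [hav Hav]] := pick_gt a A (Rmax a2 aw).
  have := Rmax_l a2 aw; have := Rmax_r a2 aw => m1 m2.
  exists av, bv; split => //; nra.
case: (Rlt_le_dec a1 aw) => h5; case: (Rlt_le_dec bw b2) => h6.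
- have [av [hav Hav]] := pick a A h5.
  have [bv [hbv Hbv]] := pick b A h6.
  exists av, bv; split => //; nra.
- have e6 : bw = b2 by lra.
  have h7 : aw < a2 by case: n2 => n2; lra.
  have h8 : b1 < bw by lra.
  have [av [hav Hav]] := pick a A h7.
  have [bv [hbv Hbv]] := pick b A h8.
  exists av, bv; split => //; nra.
- have e5 : aw = a1 by lra.
  have h8 : b1 < bw by case: n1 => n1; lra.
  have h7 : aw < a2 by lra.
  have [av [hav Hav]] := pick a A h7.
  have [bv [hbv Hbv]] := pick b A h8.
  exists av, bv; split => //; nra.
- have e5 : aw = a1 by lra.
  have e6 : bw = b2 by lra.
  have h8 : b1 < bw by lra.
  have h7 : aw < a2 by lra.
  have [av [hav Hav]] := pick a A h7.
  have [bv [hbv Hbv]] := pick b A h8.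
  exists av, bv; split => //; nra.
Qed.

Lemma place1A (a b : V -> R) (A : {set V}) a1 b1 a2 b2 aw bw :
  0 < (a1 - a2) * (b1 - b2) -> (a1 <> aw \/ b1 <> bw) -> (a2 <> aw \/ b2 <> bw) ->
  exists av bv, [/\ avoid a b A av bv, 0 < (av - a1) * (bv - b1),
     0 < (av - a2) * (bv - b2) & (av - aw) * (bv - bw) < 0].
Proof.
move=> h n1 n2.
case: (Rlt_le_dec a1 a2) => ha.
  have hb : b1 < b2 by nra.
  exact: place1A_aux.
have ha' : a2 < a1 by case: (Rle_lt_or_eq_dec _ _ ha) => // E; subst; nra.
have hb : b2 < b1 by nra.
have [av [bv [H1 H2 H3 H4]]] := place1A_aux a b A ha' hb n2 n1.
by exists av, bv; split.
Qed.

(* v tied (in a) with u1, comparable with u2 *)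
Lemma place1B (a b : V -> R) (A : {set V}) a1 a2 b2 : a1 <> a2 ->
  exists bv, (forall y, y \in A -> bv <> b y) /\ 0 < (a1 - a2) * (bv - b2).
Proof.
move=> n; case: (Rlt_le_dec a1 a2) => h.
  have [bv [hb Hb]] := pick_lt b A b2; exists bv; split => //; nra.
have h' : a2 < a1 by lra.
have [bv [hb Hb]] := pick_gt b A b2; exists bv; split => //; nra.
Qed.

(* u1 u2 incomparable, w outside the a-interval *)
Lemma place1C (a b : V -> R) (A : {set V}) a1 b1 a2 b2 aw bw :
  0 < (aw - a1) * (aw - a2) ->
  exists av bv, [/\ avoid a b A av bv, 0 < (av - a1) * (bv - b1),
     0 < (av - a2) * (bv - b2) & (av - aw) * (bv - bw) < 0].
Proof.
move=> h.
case: (Rlt_le_dec a1 aw) => h1.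
  have h2 : a2 < aw by nra.
  have h3 : Rmax a1 a2 < aw by apply: Rmax_lub_lt.
  have [av [hav Hav]] := pick a A h3.
  have [bv [hbv Hbv]] := pick_gt b A (Rmax (Rmax b1 b2) bw).
  have := Rmax_l a1 a2; have := Rmax_r a1 a2.
  have := Rmax_l (Rmax b1 b2) bw; have := Rmax_r (Rmax b1 b2) bw.
  have := Rmax_l b1 b2; have := Rmax_r b1 b2 => *.
  exists av, bv; split => //; nra.
have h1' : aw < a1 by case: (Rle_lt_or_eq_dec _ _ h1) => // E; subst; nra.
have h2 : aw < a2 by nra.
have h3 : aw < Rmin a1 a2 by apply: Rmin_glb_lt.
have [av [hav Hav]] := pick a A h3.
have [bv [hbv Hbv]] := pick_lt b A (Rmin (Rmin b1 b2) bw).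
have := Rmin_l a1 a2; have := Rmin_r a1 a2.
have := Rmin_l (Rmin b1 b2) bw; have := Rmin_r (Rmin b1 b2) bw.
have := Rmin_l b1 b2; have := Rmin_r b1 b2 => *.
exists av, bv; split => //; nra.
Qed.

Lemma place1C' (a b : V -> R) (A : {set V}) a1 b1 a2 b2 aw bw :
  0 < (bw - b1) * (bw - b2) ->
  exists av bv, [/\ avoid a b A av bv, 0 < (av - a1) * (bv - b1),
     0 < (av - a2) * (bv - b2) & (av - aw) * (bv - bw) < 0].
Proof.
move=> h; have [bv [av [[H1 H2] H3 H4 H5]]] := place1C b a A a1 a2 aw h.
exists av, bv; split => //; nra.
Qed.

End Place1.


Section Split.
Variable V : finType.
Implicit Types (L : seq (V * V)) (S : {set V}).
Local Open Scope R_scope.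

Lemma gap_seq (T : eqType) (s : seq T) (h : T -> R) :
  exists g, 0 < g /\ forall x, x \in s -> 0 < h x -> g <= h x.
Proof.
elim: s => [|y s [g [gp H]]]; first by exists 1; split => //; lra.
case: (Rlt_le_dec 0 (h y)) => hy.
  exists (Rmin g (h y)); split; first by apply: Rmin_glb_lt.
  move=> x; rewrite in_cons => /orP [/eqP ->|xs] hx; first exact: Rmin_r.
  apply: Rle_trans (Rmin_l _ _) (H x xs hx).
exists g; split => // x; rewrite in_cons => /orP [/eqP ->|xs] hx; [lra|exact: H].
Qed.

Lemma gap (a : V -> R) : exists g, 0 < g /\ forall x y, a x <> a y -> g <= Rabs (a x - a y).
Proof.
have [g [gp H]] := gap_seq (enum [set: V * V]) (fun p => Rabs (a p.1 - a p.2)).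
exists g; split => // x y n; apply: (H (x, y)); first by rewrite mem_enum in_setT.
rewrite /=; apply: Rabs_pos_lt => E; apply: n; lra.
Qed.

Lemma same_sign t t' e g : g <= Rabs t -> Rabs (t' - t) <= e -> e < g -> 0 < t' * t.
Proof.
move=> h1 h2 h3; move: h1 h2; unfold Rabs; destruct (Rcase_abs t), (Rcase_abs (t' - t)); nra.
Qed.

Lemma sgn3 p q r : 0 < p * q -> 0 < r * p -> 0 < r * q.
Proof. case: (Rtotal_order p 0) => [h|[->|h]]; nra. Qed.

Lemma sgn3' p q r : p * q < 0 -> 0 < r * p -> r * q < 0.
Proof. case: (Rtotal_order p 0) => [h|[->|h]]; nra. Qed.

Lemma sgn4 t x y : 0 < x * t -> 0 < y * t -> 0 < x * y.
Proof. case: (Rtotal_order t 0) => [h|[->|h]]; nra. Qed.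

Definition upd (sg : rel V) (u1 u2 : V) (t : bool) : rel V :=
  fun x y => if ((x == u1) && (y == u2)) || ((x == u2) && (y == u1)) then t else sg x y.

Lemma upd_sym sg u1 u2 t : symmetric sg -> symmetric (upd sg u1 u2 t).
Proof.
move=> s x y; rewrite /upd s.
by case: (x == u1); case: (x == u2); case: (y == u1); case: (y == u2).
Qed.

Lemma split_real S R1 R2 sg u1 u2 (a b : V -> R) :
  symmetric sg -> u1 \in S -> u2 \in S -> u1 != u2 ->
  inL R2 u1 u2 -> ~~ inL R1 u1 u2 -> ~ connect (dbl R1 R2 sg) u1 u2 ->
  realis S ((u1, u2) :: R1) R2 (upd sg u1 u2 true) a b ->
  exists a', realis S R1 R2 sg a' b /\
    forall z, z \in S -> a z <> a u1 -> 0 < (a' z - a' u1) * (a' z - a' u2).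
Proof.
move=> ssg u1S u2S n12 g12 nh ncon RR.
set r := dbl R1 R2 sg.
have sr : symmetric r by exact: dbl_sym.
have E' : dbl ((u1, u2) :: R1) R2 (upd sg u1 u2 true) =2 addE r u1 u2.
  move=> x y; rewrite /dbl /addE /upd inL_cons /r /dbl !xpair_eqE.
  case: (boolP (((x == u1) && (y == u2)) || ((x == u2) && (y == u1)))).
    case/orP => /andP [/eqP -> /eqP ->]; rewrite !eqxx /= ?andbT ?orbT //.
    by rewrite /= inL_sym g12.
  move=> /negbTE H; move: H.
  by case: (x == u1); case: (y == u2); case: (x == u2); case: (y == u1) => //= _; rewrite ?orbF.
have a12 : a u1 = a u2.
  apply/(re_tA RR u1S u2S); apply: connect1; by rewrite E' /addE !eqxx /= ?orbT.
have nK1 : ~~ connect r u2 u1 by apply/negP => c; apply: ncon; exact: csym.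
have b12 : b u1 <> b u2 by move=> E; move: n12; rewrite (re_inj RR u1S u2S a12 E) eqxx.
have [g [gp Hg]] := gap a.
pose d : R := if Rlt_le_dec (b u2) (b u1) then g / 2 else - (g / 2).
have hd : 0 < d * (b u1 - b u2).
  rewrite /d; case: Rlt_le_dec => h.
    apply: Rmult_lt_0_compat; lra.
  have h' : b u1 < b u2 by case: (Rle_lt_or_eq_dec _ _ h) => [//|E]; case: b12.
  have -> : - (g / 2) * (b u1 - b u2) = (g / 2) * (b u2 - b u1) by ring.
  apply: Rmult_lt_0_compat; lra.
have ad : Rabs d = g / 2.
  rewrite /d; destruct (Rlt_le_dec (b u2) (b u1)); [rewrite Rabs_pos_eq; lra | rewrite Rabs_Ropp Rabs_pos_eq; lra].
pose K z := connect r u2 z.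
pose a' z := if K z then a z + d else a z.
have db : forall x y, Rabs ((a' x - a' y) - (a x - a y)) <= g / 2.
  move=> x y.
  have -> : (a' x - a' y) - (a x - a y) = (if K x then d else 0) - (if K y then d else 0).
    by rewrite /a'; case: (K x); case: (K y); ring.
  case: (K x); case: (K y).
  - rewrite Rminus_diag Rabs_R0; lra.
  - rewrite Rminus_0_r ad; lra.
  - rewrite Rminus_0_l Rabs_Ropp ad; lra.
  - rewrite Rminus_diag Rabs_R0; lra.
have ss : forall x y, a x <> a y -> 0 < (a' x - a' y) * (a x - a y).
  move=> x y n; apply: (same_sign (Hg x y n) (db x y)); lra.
have dn0 : d <> 0 by move=> E; move: hd; rewrite E Rmult_0_l; lra.
have mixed : forall x y, K x -> K y = false -> a x + d = a y -> False.
  move=> x y Kx Ky E; case: (Req_dec (a x) (a y)) => [Ea|n]; first by apply: dn0; lra.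
  have := ss x y n; rewrite /a' Kx Ky E Rminus_diag Rmult_0_l; lra.
have eqc : forall x y, a' x = a' y <-> a x = a y /\ K x = K y.
  move=> x y; rewrite /a'; case Kx: (K x); case Ky: (K y).
  - by split; [move=> E; split => //; lra | case=> E _; lra].
  - by split => [E|[_ //]]; case: (mixed x y Kx Ky).
  - by split => [E|[_ //]]; case: (mixed y x Ky Kx).
  - by split => [E|[E _]].
have KS : forall x y, connect r x y -> K x = K y.
  move=> x y c; rewrite /K; apply/idP/idP => H; first exact: connect_trans H c.
  exact: connect_trans H (csym sr c).
have Ku1 : K u1 = false by apply/negbTE.
have Ku2 : K u2 by rewrite /K connect0.
exists a'; split.
  constructor.
  - move=> x y xS yS /eqc [E _] Eb; exact: (re_inj RR xS yS E Eb).
  - move=> x y H1 H2; have H1' : inL ((u1, u2) :: R1) x y by rewrite inL_cons H1 !orbT.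
    have P := re_s1 RR H1' H2.
    have n : a x <> a y by move=> E; move: P; rewrite E Rminus_diag Rmult_0_l; lra.
    exact: sgn3 P (ss x y n).
  - move=> x y H1 H2; case: (boolP (inL ((u1, u2) :: R1) x y)) => H3.
      move: H3; rewrite inL_cons (negbTE H2) orbF !xpair_eqE.
      case/orP => /andP [/eqP -> /eqP ->]; rewrite /a' Ku1 Ku2 -a12.
        have -> : (a u1 - (a u1 + d)) * (b u1 - b u2) = - (d * (b u1 - b u2)) by ring.
        lra.
      have -> : (a u1 + d - a u1) * (b u2 - b u1) = - (d * (b u1 - b u2)) by ring.
      lra.
    have P := re_s2 RR H1 H3.
    have n : a x <> a y by move=> E; move: P; rewrite E Rminus_diag Rmult_0_l; lra.
    exact: sgn3' P (ss x y n).
  - move=> x y xS yS; rewrite eqc (re_tA RR xS yS) (eq_connect E'); split.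
      move=> [c EK]; case: (addE_conn2 sr c) => // [[H1 H2]].
      case Kx: (K x).
        have Ky : K y by rewrite -EK.
        apply: connect_trans (csym sr Kx) Ky.
      have Ky : K y = false by rewrite -EK.
      have c1 : connect r x u1.
        case: H1 => // H1; by move: Kx; rewrite /K (csym sr H1).
      have c2 : connect r y u1.
        case: H2 => // H2; by move: Ky; rewrite /K (csym sr H2).
      exact: connect_trans c1 (csym sr c2).
    move=> c; split; last exact: KS.
    apply: connect_mono c => p q H; apply/orP; left; apply/orP; left; exact: H.
  - move=> x y xS yS; rewrite (re_tB RR xS yS); apply: iff_sym.
    rewrite (eq_connect (e' := dbl ((u1, u2) :: R1) R2 (nsg (upd sg u1 u2 true)))) //.
    move=> p q; rewrite /dbl /nsg /upd inL_cons !xpair_eqE.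
    case: (boolP (((p == u1) && (q == u2)) || ((p == u2) && (q == u1)))).
      case/orP => /andP [/eqP -> /eqP ->]; rewrite ?(negbTE nh) ?(inL_sym R1 u2 u1) ?(negbTE nh) //=;
        by rewrite !andbF.
    move=> /negbTE H; move: H.
    by case: (p == u1); case: (q == u2); case: (p == u2); case: (q == u1) => //= _.
move=> z zS n; rewrite /a' Ku1 Ku2 -a12.
have g1 : g <= Rabs (a z - a u1) by apply: Hg.
have hg : g / 2 < g by lra.
have -> : (if K z then a z + d else a z) - a u1 = (a z - a u1) + (if K z then d else 0).
  by case: (K z); ring.
have -> : (if K z then a z + d else a z) - (a u1 + d) = (a z - a u1) + ((if K z then d else 0) - d).
  by case: (K z); ring.
apply: (sgn4 (t := a z - a u1)).
  apply: (same_sign g1 _ hg).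
  have -> : a z - a u1 + (if K z then d else 0) - (a z - a u1) = (if K z then d else 0) by ring.
  by case: (K z); rewrite ?ad ?Rabs_R0; lra.
apply: (same_sign g1 _ hg).
have -> : a z - a u1 + ((if K z then d else 0) - d) - (a z - a u1) = (if K z then d else 0) - d by ring.
case: (K z).
  rewrite Rminus_diag Rabs_R0; lra.
rewrite Rminus_0_l Rabs_Ropp ad; lra.
Qed.





End Split.


Section Steps.
Variable V : finType.
Implicit Types (L : seq (V * V)) (S : {set V}).
Local Open Scope R_scope.

Lemma dbl_addE (R1 R2 : seq (V * V)) sg u1 u2 : inL R2 u1 u2 ->
  dbl ((u1, u2) :: R1) R2 (upd sg u1 u2 true) =2 addE (dbl R1 R2 sg) u1 u2.
Proof.
move=> g12 x y; rewrite /dbl /addE /upd inL_cons !xpair_eqE.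
case: (boolP (((x == u1) && (y == u2)) || ((x == u2) && (y == u1)))).
  case/orP => /andP [/eqP -> /eqP ->]; rewrite !eqxx /= ?andbT ?orbT //.
  by rewrite /= inL_sym g12.
move=> /negbTE H; move: H.
by case: (x == u1); case: (y == u2); case: (x == u2); case: (y == u1) => //= _; rewrite ?orbF.
Qed.

Lemma nsg_upd (sg : rel V) u1 u2 t : nsg (upd sg u1 u2 t) =2 upd (nsg sg) u1 u2 (~~ t).
Proof. by move=> x y; rewrite /nsg /upd; case: ifP. Qed.

Lemma drop_h S (R1 R2 : seq (V * V)) sg u1 u2 t (a b : V -> R) : ~~ inL R2 u1 u2 ->
  realis S ((u1, u2) :: R1) R2 (upd sg u1 u2 t) a b -> realis S R1 R2 sg a b.
Proof.
move=> ng RR.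
have E : forall sg' t', dbl ((u1, u2) :: R1) R2 (upd sg' u1 u2 t') =2 dbl R1 R2 sg'.
  move=> sg' t' x y; rewrite /dbl /upd inL_cons !xpair_eqE.
  case: (boolP (((x == u1) && (y == u2)) || ((x == u2) && (y == u1)))).
    case/orP => /andP [/eqP -> /eqP ->]; rewrite ?(negbTE ng) ?(inL_sym R2 u2 u1) ?(negbTE ng);
    by rewrite /= ?andbF.
  move=> /negbTE H; move: H.
  by case: (x == u1); case: (y == u2); case: (x == u2); case: (y == u1) => //= _.
constructor.
- exact: (re_inj RR).
- move=> x y H1 H2; apply: (re_s1 RR) => //; by rewrite inL_cons H1 !orbT.
- move=> x y H1 H2; apply: (re_s2 RR) => //; rewrite inL_cons (negbTE H2) orbF !xpair_eqE.
  apply/negP => /orP [] /andP [/eqP Ex /eqP Ey]; subst x y; move: H1 ng.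
    by move=> ->.
  by rewrite inL_sym => ->.
- by move=> x y xS yS; rewrite (re_tA RR xS yS) (eq_connect (E sg t)).
- move=> x y xS yS; rewrite (re_tB RR xS yS) (eq_connect (e' := dbl R1 R2 (nsg sg))) //.
  move=> p q; rewrite -(E (nsg sg) (~~ t)) /dbl nsg_upd //.
Qed.

Lemma inL_in S L x y : ends_in S L -> loopless L -> inL L x y -> y \in S :\ x.
Proof.
move=> e l /inL_split [H|H]; have /andP [h1 h2] := e _ H; have := l _ H; rewrite /= in h1 h2 *;
  by rewrite in_setD1 ?h1 ?h2 // eq_sym => ->.
Qed.

Lemma step0 S L1 L2 v (sg : rel V) : symmetric sg -> cfg S L1 L2 -> v \in S ->
  deg L1 v = 1%nat -> deg L2 v = 1%nat ->
  (forall sg', symmetric sg' -> exists a b, realis (S :\ v) (rest v L1) (rest v L2) sg' a b) ->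
  exists a b, realis S L1 L2 sg a b.
Proof.
move=> ssg C vS d1 d2 IH.
have [u [Hu iu]] := deg1_nb d1; have [w [Hw iw]] := deg1_nb d2.
have uS := inL_in (cf_e1 C) (cf_l1 C) iu; have wS := inL_in (cf_e2 C) (cf_l2 C) iw.
suff core : forall sg0, symmetric sg0 -> (u = w -> sg0 v u) -> exists a b, realis S L1 L2 sg0 a b.
  case: (boolP ((u == w) && ~~ sg v u)) => [/andP [/eqP uw ns]|H].
    have [a [b RR]] := core (nsg sg) (nsg_sym ssg) (fun _ => ns).
    exists b, a; apply: realis_eqsg (realis_ab RR) => x y; by rewrite /nsg negbK.
  apply: (core sg ssg) => E; move: H; by rewrite E eqxx /= negbK.
move=> sg0 ssg0 hsg; have [a [b RR]] := IH sg0 ssg0.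
case: (eqVneq u w) => [E|uw].
  subst w; have [bv [_ Hb]] := pick_gt b (S :\ v) 0.
  exists (fun z => if z == v then a u else a z), (fun z => if z == v then bv else b z).
  have dv : dbl L1 L2 sg0 v u by rewrite /dbl iu iw hsg.
  apply: (realis_ext (u := u) ssg0 vS uS (cf_l1 C) (cf_l2 C) RR).
  - by move=> y /andP [/Hu -> _].
  - by move=> y yS _ E; exact: Hb y yS E.
  - by move=> y /Hu ->; rewrite iw.
  - by move=> y /Hw ->; rewrite iu.
  - by move=> y yS; split => [E|[_ E]].
  - move=> y yS; split => [E|[H _]]; first by case: (Hb y yS E).
    by move: H; rewrite /dbl /nsg (hsg erefl) /= !andbF.
have nuw : a u <> a w \/ b u <> b w.
  case: (Req_dec (a u) (a w)) => E; last by left.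
  right => E'; move/eqP: uw; apply; exact: (re_inj RR uS wS E E').
have [av [bv [[Ha Hb] P1 P2]]] := place0 a b (S :\ v) nuw.
exists (fun z => if z == v then av else a z), (fun z => if z == v then bv else b z).
have ndv : forall sg', dbl L1 L2 sg' v u = false.
  move=> sg'; rewrite /dbl iu /=; apply/negP => /andP [/Hw E _]; by move/eqP: uw.
apply: (realis_ext (u := u) ssg0 vS uS (cf_l1 C) (cf_l2 C) RR).
- by move=> y /andP [/Hu -> _].
- by move=> y yS E; case: (Ha y yS E).
- by move=> y /Hu -> _.
- by move=> y /Hw -> _.
- move=> y yS; rewrite ndv; split => [E|[//]]; by case: (Ha y yS E).
- move=> y yS; rewrite ndv; split => [E|[//]]; by case: (Hb y yS E).
Qed.

End Steps.


Section Step1.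
Variable V : finType.
Implicit Types (L : seq (V * V)) (S : {set V}).
Local Open Scope R_scope.

Lemma step1_core S L1 L2 v (sg : rel V) u1 u2 w : symmetric sg -> cfg S L1 L2 -> v \in S ->
  deg L1 v = 2%nat -> deg L2 v = 1%nat ->
  (forall y, inL L1 v y -> y = u1 \/ y = u2) -> inL L1 v u1 -> inL L1 v u2 ->
  (forall y, inL L2 v y -> y = w) -> inL L2 v w -> w != u2 -> (w = u1 -> sg v u1) ->
  (forall sg', symmetric sg' -> exists a b, realis (S :\ v) ((u1, u2) :: rest v L1) (rest v L2) sg' a b) ->
  exists a b, realis S L1 L2 sg a b.
Proof.
move=> ssg C vS d1 d2 nb i1 i2 Hw iw hw2 hsg IH.
have n12 : u1 != u2 := deg2_distinct (cf_e1 C) (cf_l1 C) (cf_c1 C) (cf_s1 C) vS d1 nb.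
have u1S := inL_in (cf_e1 C) (cf_l1 C) i1; have u2S := inL_in (cf_e1 C) (cf_l1 C) i2.
have wS := inL_in (cf_e2 C) (cf_l2 C) iw.
have C' := cfg_ext1 C vS d1 d2 nb i1 i2.
set S' := S :\ v in u1S u2S wS C' IH *.
set R1 := rest v L1 in C' IH *; set R2 := rest v L2 in C' IH *.
have br : forall r : rel V, (forall x y, r x y -> inL R1 x y) -> ~ connect r u1 u2.
  move=> r sub c; apply: (tree_bridge (cf_e1 C') (cf_c1 C') (cf_s1 C') (q := (u1, u2)) (mem_head _ _)).
  rewrite /= eqxx; exact: connect_mono sub _ _ c.
have nh : ~~ inL R1 u1 u2 by apply/negP => H; apply: (br (inL R1)) => //; exact: connect1.
have subd : forall sg', forall x y, dbl R1 R2 sg' x y -> inL R1 x y by move=> sg' x y /and3P [].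
have hh : inL ((u1, u2) :: R1) u1 u2 by rewrite inL_cons eqxx.
case: (eqVneq w u1) => [Ew|hw1].
  (* case: v doubly joined to u1 *)
  subst w.
  have [a [b [RR n12a]]] : exists a b, realis S' R1 R2 sg a b /\ a u1 <> a u2.
    have [a0 [b0 RA]] := IH _ (upd_sym u1 u2 true ssg).
    case: (boolP (inL R2 u1 u2)) => g.
      have [a' [RR _]] := split_real ssg u1S u2S n12 g nh (br _ (subd sg)) RA.
      exists a', b0; split => // E; have := re_s2 RR g nh; rewrite E Rminus_diag Rmult_0_l; lra.
    exists a0, b0; split; first exact: drop_h g RA.
    move=> E; have := re_s1 RA hh g; rewrite E Rminus_diag Rmult_0_l; lra.
  have [bv [Hb Pb]] := place1B a b S' (b u2) n12a.
  exists (fun z => if z == v then a u1 else a z), (fun z => if z == v then bv else b z).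
  apply: (realis_ext (u := u1) ssg vS u1S (cf_l1 C) (cf_l2 C) RR).
  - by move=> y /andP [_ /Hw].
  - by move=> y yS _ E; case: (Hb y yS E).
  - move=> y /nb [] -> //; by rewrite iw.
  - by move=> y /Hw ->; rewrite i1.
  - have dv : dbl L1 L2 sg v u1 by rewrite /dbl i1 iw (hsg erefl).
    by move=> y yS; split => [E|[_ E]].
  - move=> y yS; split => [E|[H _]]; first by case: (Hb y yS E).
    by move: H; rewrite /dbl /nsg (hsg erefl) /= !andbF.
have nw1 : ~~ inL L2 v u1 by apply/negP => /Hw E; move/eqP: hw1; rewrite E.
have nw2 : ~~ inL L2 v u2 by apply/negP => /Hw E; move/eqP: hw2; rewrite E.
suff [a [b [RR [av [bv [[Ha Hb] P1 P2 P3]]]]]] : exists a b, realis S' R1 R2 sg a b /\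
   exists av bv, [/\ avoid a b S' av bv, 0 < (av - a u1) * (bv - b u1),
     0 < (av - a u2) * (bv - b u2) & (av - a w) * (bv - b w) < 0].
  exists (fun z => if z == v then av else a z), (fun z => if z == v then bv else b z).
  have ndv : forall sg', dbl L1 L2 sg' v u1 = false by move=> sg'; rewrite /dbl (negbTE nw1) andbF.
  apply: (realis_ext (u := u1) ssg vS u1S (cf_l1 C) (cf_l2 C) RR).
  - move=> y /andP [/nb [] -> H]; by [move: H; rewrite (negbTE nw1) | move: H; rewrite (negbTE nw2)].
  - by move=> y yS E; case: (Ha y yS E).
  - by move=> y /nb [] -> _.
  - by move=> y /Hw -> _.
  - move=> y yS; rewrite ndv; split => [E|[//]]; by case: (Ha y yS E).
  - move=> y yS; rewrite ndv; split => [E|[//]]; by case: (Hb y yS E).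
have [a [b RA]] := IH _ (upd_sym u1 u2 true ssg).
case: (boolP (inL R2 u1 u2)) => g; last first.
  have RR := drop_h g RA.
  exists a, b; split => //.
  apply: (place1A a b S' (re_s1 RA hh g)).
    case: (Req_dec (a u1) (a w)) => E; last by left.
    right => E'; move/eqP: hw1; apply; apply: esym; exact: (re_inj RR u1S wS E E').
  case: (Req_dec (a u2) (a w)) => E; last by left.
  right => E'; move/eqP: hw2; apply; apply: esym; exact: (re_inj RR u2S wS E E').
have a12 : a u1 = a u2.
  apply/(re_tA RA u1S u2S); apply: connect1; by rewrite dbl_addE // /addE !eqxx /= ?orbT.
case: (Req_dec (a w) (a u1)) => Eaw; last first.
  have [a' [RR out]] := split_real ssg u1S u2S n12 g nh (br _ (subd sg)) RA.
  exists a', b; split => //; apply: place1C; exact: out.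
have [a2 [b2 RB]] := IH _ (upd_sym u1 u2 false ssg).
have nb2 : b2 w <> b2 u1.
  move=> E; have := proj1 (re_tB RB wS u1S) E.
  rewrite (eq_connect (e' := addE (dbl R1 R2 (nsg sg)) u1 u2)); last first.
    move=> x y; rewrite -(dbl_addE R1 (nsg sg) g x y) /dbl nsg_upd //.
  move/addE_conn => H.
  have sub : forall x y, dbl R1 R2 (nsg sg) x y -> dbl ((u1, u2) :: R1) R2 (nsg (upd sg u1 u2 true)) x y.
    move=> x y H'; have := H'; rewrite /dbl => /and3P [h1 h2 h3].
    rewrite inL_cons h1 h2 !orbT /= /nsg /upd.
    case: ifP => // /orP [] /andP [/eqP Ex /eqP Ey]; subst x y; first by move: h1; rewrite (negbTE nh).
    by move: h1; rewrite inL_sym (negbTE nh).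
  have tie : forall z, connect (dbl R1 R2 (nsg sg)) w z -> z \in S' -> a w = a z -> w = z.
    move=> z c zS Ea; apply: (re_inj RA wS zS Ea); apply/(re_tB RA wS zS).
    exact: connect_mono sub _ _ c.
  case: H => [c|[c|c]].
  - by move/eqP: hw1; apply; apply: tie.
  - by move/eqP: hw1; apply; apply: tie.
  - by move/eqP: hw2; apply; apply: tie => //; rewrite -a12.
have RB' : realis S' ((u1, u2) :: R1) R2 (upd (nsg sg) u1 u2 true) b2 a2.
  apply: realis_eqsg (realis_ab RB) => x y; by rewrite nsg_upd.
have [b' [RR0 out]] := split_real (nsg_sym ssg) u1S u2S n12 g nh (br _ (subd (nsg sg))) RB'.
have RR : realis S' R1 R2 sg a2 b'.
  apply: realis_eqsg (realis_ab RR0) => x y; by rewrite /nsg negbK.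
exists a2, b'; split => //; apply: place1C'; exact: out.
Qed.

End Step1.


Section Main.
Variable V : finType.
Implicit Types (L : seq (V * V)) (S : {set V}).
Local Open Scope R_scope.

Lemma step1 S L1 L2 v (sg : rel V) : symmetric sg -> cfg S L1 L2 -> v \in S ->
  deg L1 v = 2%nat -> deg L2 v = 1%nat ->
  (forall M1 M2, cfg (S :\ v) M1 M2 -> forall sg', symmetric sg' ->
     exists a b, realis (S :\ v) M1 M2 sg' a b) ->
  exists a b, realis S L1 L2 sg a b.
Proof.
move=> ssg C vS d1 d2 IH.
have [u1 [u2 [nb i1 i2]]] := deg2_nb d1.
have [w [Hw iw]] := deg1_nb d2.
have n12 : u1 != u2 := deg2_distinct (cf_e1 C) (cf_l1 C) (cf_c1 C) (cf_s1 C) vS d1 nb.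
have main : forall p1 p2, (forall y, inL L1 v y -> y = p1 \/ y = p2) -> inL L1 v p1 -> inL L1 v p2 ->
    w != p2 -> exists a b, realis S L1 L2 sg a b.
  move=> p1 p2 nbp ip1 ip2 wp2.
  have IH' := IH _ _ (cfg_ext1 C vS d1 d2 nbp ip1 ip2).
  case: (boolP ((w == p1) && ~~ sg v p1)) => [/andP [/eqP wp1 ns]|H].
    have [a [b RR]] := step1_core (nsg_sym ssg) C vS d1 d2 nbp ip1 ip2 Hw iw wp2 (fun _ => ns) IH'.
    exists b, a; apply: realis_eqsg (realis_ab RR) => x y; by rewrite /nsg negbK.
  apply: (step1_core ssg C vS d1 d2 nbp ip1 ip2 Hw iw wp2 _ IH') => E; move: H.
  by rewrite E eqxx /= negbK.
case: (eqVneq w u2) => [E|N]; last exact: (main u1 u2 nb i1 i2 N).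
apply: (main u2 u1) => //.
  by move=> y /nb [] ->; [right|left].
by rewrite E eq_sym.
Qed.

Lemma realise_all n : forall S L1 L2, #|S| = n.+1 -> cfg S L1 L2 ->
  forall sg, symmetric sg -> exists a b, realis S L1 L2 sg a b.
Proof.
elim: n => [|n IH] S L1 L2 cS C sg ssg.
  have [s Es] : exists s, S = [set s] by apply/cards1P; rewrite cS.
  have L1n : L1 = [::] by move: (cf_s1 C); rewrite cS; case: (L1) => //= x l H; exfalso; lia.
  have L2n : L2 = [::] by move: (cf_s2 C); rewrite cS; case: (L2) => //= x l H; exfalso; lia.
  subst L1 L2 S.
  exists (fun _ => 0), (fun _ => 0); constructor.
  - by move=> x y; rewrite !in_set1 => /eqP -> /eqP ->.
  - by [].
  - by [].
  - by move=> x y; rewrite !in_set1 => /eqP -> /eqP ->; split => // _; exact: connect0.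
  - by move=> x y; rewrite !in_set1 => /eqP -> /eqP ->; split => // _; exact: connect0.
have n1 : (1 < #|S|)%nat by rewrite cS.
have [v vS [d3 p1 p2]] := low_deg C n1.
have cS' : #|S :\ v| = n.+1 by have := card_del vS; rewrite cS; lia.
have IH' : forall M1 M2, cfg (S :\ v) M1 M2 -> forall sg', symmetric sg' ->
     exists a b, realis (S :\ v) M1 M2 sg' a b.
  by move=> M1 M2 C'; apply: IH.
case E1: (deg L1 v) p1 d3 => [//|[|[|k]]] _; case E2: (deg L2 v) p2 => [//|[|[|k']]] _ //= d3;
  try by exfalso; lia.
- exact: (step0 ssg C vS E1 E2 (IH' _ _ (cfg_ext0 C vS E1 E2))).
- have [a [b RR]] := step1 ssg (cfg_swap C) vS E2 E1 (fun M1 M2 C' => IH' _ _ C').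
  exists a, (fun z => - b z); exact: realis_tr.
- exact: (step1 ssg C vS E1 E2 IH').
Qed.

End Main.


Section Bridge.
Variables (V E : finType) (src dst : E -> V).

Definition fe (e : E) : V * V := (src e, dst e).

Lemma inL_map (s : seq E) a b :
  inL [seq fe e | e <- s] a b = has (fun e => joins src dst e a b) s.
Proof.
apply/idP/hasP.
  by case/orP => /mapP [e es [E1 E2]]; exists e => //; rewrite /joins E1 E2 !eqxx ?orbT.
move=> [e es]; rewrite /joins /inL => /orP [] /andP [/eqP E1 /eqP E2]; apply/orP.
  by left; apply/mapP; exists e; rewrite // /fe E1 E2.
by right; apply/mapP; exists e; rewrite // /fe E1 E2.
Qed.

Lemma joins_eq e a b c d : joins src dst e a b -> joins src dst e c d ->
  (a = c /\ b = d) \/ (a = d /\ b = c).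
Proof.
rewrite /joins => /orP [] /andP [/eqP E1 /eqP E2] /orP [] /andP [/eqP E3 /eqP E4];
  subst; by [left|right].
Qed.

Lemma cycle_of_conn (T : {set E}) (e : E) (s : seq E) :
  loopfree src dst -> e \in T -> e \notin s -> {subset s <= T} ->
  connect (inL [seq fe e | e <- s]) (src e) (dst e) -> has_cycle src dst T.
Proof.
move=> lf eT ens sT /connectP [p pth lst].
move: lst; case: (shortenP pth) => p' pth' uq _ lst.
set x := src e in pth' uq lst; set y := dst e in lst.
pose k := size p'.
have kp : (0 < k)%N.
  rewrite /k; case: (p') lst => [|//] /= E'; by move: (lf e); rewrite -/x -/y E' eqxx.
pose vs := x :: p'.
have stp : forall i, (i < k)%N -> inL [seq fe e | e <- s] (nth x vs i) (nth x vs i.+1).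
  by move=> i ik; move/(pathP x): pth' => H; exact: H i ik.
pose pe (a b : V) := nth e s (find (fun e' => joins src dst e' a b) s).
have peP : forall a b, inL [seq fe e | e <- s] a b -> pe a b \in s /\ joins src dst (pe a b) a b.
  move=> a b; rewrite inL_map => H; split; first by apply: mem_nth; rewrite -has_find.
  exact: (nth_find e H).
pose es0 := [seq pe (nth x vs i) (nth x vs i.+1) | i <- iota 0 k].
have es0s : {subset es0 <= s}.
  move=> f /mapP [i]; rewrite mem_iota /= add0n => ik ->; exact: (peP _ _ (stp i ik)).1.
have szvs : size vs = k.+1 by [].
have nthv : forall i j, (i < k.+1)%N -> (j < k.+1)%N -> nth x vs i = nth x vs j -> i = j.
  move=> i j ik jk E'; apply/eqP; by rewrite -(@nth_uniq _ x vs i j) ?E'.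
rewrite /has_cycle; exists (es0 ++ [:: e]), vs; split.
- by rewrite size_cat addn1.
- by rewrite size_cat size_map size_iota addn1.
- rewrite uq andbT cat_uniq /= andbT orbF; apply/andP; split.
    rewrite map_inj_in_uniq ?iota_uniq // => i j; rewrite !mem_iota /= !add0n => ik jk Eq.
    have [J1 J2] := peP _ _ (stp i ik); have [J3 J4] := peP _ _ (stp j jk).
    rewrite Eq in J2.
    have ik' : (i < k.+1)%N by lia. have jk' : (j < k.+1)%N by lia.
    have ik'' : (i.+1 < k.+1)%N by lia. have jk'' : (j.+1 < k.+1)%N by lia.
    case: (joins_eq J2 J4) => [[A _]|[A B]]; first exact: nthv A.
    have := nthv _ _ ik' jk'' A; have := nthv _ _ ik'' jk' B; lia.
  by apply/negP => /es0s; rewrite (negbTE ens).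
- move=> f; rewrite mem_cat => /orP [/es0s /sT //|]; by rewrite in_cons in_nil orbF => /eqP ->.
- move=> i; rewrite size_cat size_map size_iota addn1 => ik e0 v0.
  rewrite (set_nth_default x v0); last by rewrite szvs.
  case: (ltngtP i k) => [ilt|igt|->]; [|lia|].
    rewrite nth_cat size_map size_iota ilt (nth_map 0%N) ?size_iota // nth_iota // add0n.
    rewrite modn_small; last by lia.
    rewrite (set_nth_default x v0); last by rewrite szvs; lia.
    exact: (peP _ _ (stp i ilt)).2.
  rewrite nth_cat size_map size_iota ltnn subnn /= modnn.
  have -> : nth v0 vs 0 = x by [].
  have -> : nth x vs k = y by rewrite lst /vs /k -[size p']/((size (x :: p')).-1) nth_last.
  by rewrite /joins /x /y !eqxx orbT.
Qed.

Lemma forest_of (T : {set E}) (s : seq E) : loopfree src dst -> ~ has_cycle src dst T ->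
  uniq s -> {subset s <= T} -> forestL [seq fe e | e <- s].
Proof.
move=> lf nc; elim: s => [//|e s IH] /= /andP [ens us] sT; split.
  move=> c; apply: nc; apply: (cycle_of_conn lf _ ens _ c).
    by apply: sT; rewrite mem_head.
  by move=> f fs; apply: sT; rewrite in_cons fs orbT.
by apply: IH => // f fs; apply: sT; rewrite in_cons fs orbT.
Qed.

Definition LT (T : {set E}) := [seq fe e | e <- enum T].

Lemma inL_LT (T : {set E}) a b : inL (LT T) a b = [exists e in T, joins src dst e a b].
Proof.
rewrite /LT inL_map; apply/hasP/existsP => [[e]|[e /andP [eT J]]].
  by rewrite mem_enum => eT J; exists e; rewrite eT.
by exists e; rewrite ?mem_enum.
Qed.

Lemma tree_size (T : {set E}) : loopfree src dst -> spanning_tree src dst T -> (0 < #|V|)%N ->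
  #|T| + 1 = #|V|.
Proof.
move=> lf [sc nc] Vp.
have fL : forestL (LT T) by apply: (forest_of lf nc (enum_uniq (mem T))) => e; rewrite mem_enum.
have := forest_size fL Vp; rewrite /LT size_map -cardE => h1.
have cS : connS [set: V] (LT T).
  move=> x y _ _; rewrite (eq_connect (e' := fun a b => [exists e in T, joins src dst e a b])) //.
  by move=> a b; rewrite inL_LT.
have [x _] : exists x : V, true by case/card_gt0P: Vp => x; exists x.
have := conn_count1 (s0 := x) _ cS; rewrite /LT size_map -cardE cardsT => h2.
have : (#|V| <= 1 + #|T|)%N by apply: h2 => //; move=> p _; rewrite !in_setT.
lia.
Qed.

Lemma no_parallel (T : {set E}) e e' u w : loopfree src dst -> ~ has_cycle src dst T ->
  e \in T -> e' \in T -> joins src dst e u w -> joins src dst e' u w -> e = e'.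
Proof.
move=> lf nc eT e'T J J'; apply/eqP/negPn/negP => ne; apply: nc.
have uw : u != w.
  apply/negP => /eqP E'; subst w; move: J (lf e); rewrite /joins.
  by case/orP => /andP [/eqP -> /eqP ->]; rewrite eqxx.
exists [:: e; e'], [:: u; w]; split => //.
- by rewrite /= !in_cons in_nil !orbF ne uw.
- by move=> f; rewrite !in_cons in_nil orbF => /orP [] /eqP ->.
- move=> i; case: i => [|[|//]] _ e0 v0 //=.
  by move: J'; rewrite /joins orbC; case: (_ && _); case: (_ && _).
Qed.

End Bridge.


Delimit Scope R_scope with R.

Lemma enum2 : enum 'I_2 = [:: ord0; ord_max].
Proof. apply: (inj_map val_inj); by rewrite val_enum_ord. Qed.

Lemma reqbP (x y : R) : reqb x y = true <-> x = y.
Proof. rewrite /reqb; case: Req_dec_T => //. Qed.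

Lemma abs_cmp (x y : R) : (Rabs (x - y) <= Rabs (x + y))%R <-> (0 <= x * y)%R.
Proof.
unfold Rabs; destruct (Rcase_abs (x - y)), (Rcase_abs (x + y)); split => H; nra.
Qed.

Lemma abs_cmp' (x y : R) : (Rabs (x + y) <= Rabs (x - y))%R <-> (x * y <= 0)%R.
Proof.
unfold Rabs; destruct (Rcase_abs (x - y)), (Rcase_abs (x + y)); split => H; nra.
Qed.

Lemma max_eq (X Y : R) : Rabs X = Rmax (Rabs X) (Rmax (Rabs Y) R0) <-> (Rabs Y <= Rabs X)%R.
Proof.
rewrite (Rmax_left (Rabs Y) R0); last exact: Rabs_pos Y.
split => H.
  rewrite H; exact: Rmax_r.
by rewrite Rmax_left.
Qed.

Lemma max_eq' (X Y : R) : Rabs Y = Rmax (Rabs X) (Rmax (Rabs Y) R0) <-> (Rabs X <= Rabs Y)%R.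
Proof.
rewrite (Rmax_left (Rabs Y) R0); last exact: Rabs_pos Y.
split => H.
  rewrite H; exact: Rmax_l.
by rewrite Rmax_right.
Qed.

Theorem theorem4p3 (V E : finType) (src dst : E -> V) (T : 'I_2 -> {set E}) :
  tree_decomposition src dst T ->
  exists p : V -> 'I_2 -> R, realisation src dst T p.
Proof.
move=> [lf trees part].
have ord2 : forall i : 'I_2, i = ord0 \/ i = ord_max.
  move=> [[|[|//]] ?]; [left|right]; exact: val_inj.
pose kappa (e : E) : 'I_2 := if e \in T ord0 then ord0 else ord_max.
have kapP : forall i e, kappa e = i <-> e \in T i.
  move=> i e; have [j [jin uj]] := part e; rewrite /kappa.
  case: ifP => H.
    split => [<- //|H']; by rewrite -(uj _ H') (uj _ H).
  split => [<-|H'].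
    by case: (ord2 j) jin => ->; rewrite ?H.
  by case: (ord2 i) H' => ->; rewrite ?H.
case: (posnP #|V|) => [V0|Vp].
  have nov : V -> False.
    by move=> x; move: V0; rewrite -cardsT (cardsD1 x) in_setT.
  exists (fun _ _ => 0%R); split.
  - by move=> x; case: (nov x).
  - by move=> u; case: (nov u).
  - by exists kappa; split => // u; case: (nov u).
set L0 := LT src dst (T ord0); set L1 := LT src dst (T ord_max).
have cS : forall i, connS [set: V] (LT src dst (T i)).
  move=> i x y _ _; rewrite (eq_connect (e' := fun a b => [exists e in T i, joins src dst e a b])).
    exact: (trees i).1.
  by move=> a b; rewrite inL_LT.
have lL : forall i, loopless (LT src dst (T i)) by move=> i p /mapP [e _ ->]; exact: lf e.
have sL : forall i, size (LT src dst (T i)) + 1 = #|[set: V]|.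
  by move=> i; rewrite /LT size_map -cardE cardsT; exact: tree_size lf (trees i) Vp.
have C : cfg [set: V] L0 L1.
  by constructor; rewrite /L0 /L1 //; move=> p _; rewrite !in_setT.
have cn : #|[set: V]| = (#|V|.-1).+1 by rewrite cardsT; lia.
have [a [b RR]] := realise_all cn C (sg := fun _ _ => true) (fun _ _ => erefl).
pose p (v : V) (i : 'I_2) : R := if i == ord0 then (a v + b v)%R else (a v - b v)%R.
have pE0 : forall v, p v ord0 = (a v + b v)%R by [].
have pE1 : forall v, p v ord_max = (a v - b v)%R by [].
have EBk : forall u w i, (i \in kappa @: edges_between src dst u w) = inL (LT src dst (T i)) u w.
  move=> u w i; rewrite inL_LT; apply/imsetP/existsP.
    move=> [e]; rewrite in_set => J ->; exists e; rewrite J andbT; exact/kapP.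
  move=> [e /andP [eT J]]; exists e; first by rewrite in_set.
  by apply/esym/kapP.
have fcolsE : forall u w,
   (ord0 \in fcols p u w <-> (0 <= (a u - a w) * (b u - b w))%R) /\
   (ord_max \in fcols p u w <-> ((a u - a w) * (b u - b w) <= 0)%R).
  move=> u w; rewrite !in_set /linf enum2 /= !pE0 !pE1.
  have -> : (a u + b u - (a w + b w) = (a u - a w) + (b u - b w))%R by ring.
  have -> : (a u - b u - (a w - b w) = (a u - a w) - (b u - b w))%R by ring.
  split; split.
  - by move/reqbP/max_eq/abs_cmp.
  - by move=> H; apply/reqbP/max_eq/abs_cmp.
  - by move/reqbP/max_eq'/abs_cmp'.
  - by move=> H; apply/reqbP/max_eq'/abs_cmp'.
have key : forall u w i, (0 < mult src dst u w)%nat ->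
    (i \in fcols p u w) = inL (LT src dst (T i)) u w.
  move=> u w i m.
  have hE : inL L0 u w || inL L1 u w.
    case/card_gt0P: m => e; rewrite in_set => J.
    have eT : e \in T (kappa e) by apply/kapP.
    by case: (ord2 (kappa e)) eT => ->; rewrite /L0 /L1 !inL_LT => eT; apply/orP; [left|right];
      apply/existsP; exists e; rewrite eT.
  have [F0 F1] := fcolsE u w.
  have Pv : (inL L0 u w && inL L1 u w -> (a u - a w) * (b u - b w) = 0)%R.
    move=> H; have : a u = a w.
      apply/(re_tA RR); rewrite ?in_setT //; apply: connect1; by rewrite /dbl andbT.
    move=> ->; ring.
  case: (ord2 i) => ->; rewrite -/L0 -/L1; apply/idP/idP.
  - move/F0 => H; apply/negPn/negP => N; move: hE; rewrite (negbTE N) /= => H1.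
    have := re_s2 RR H1 N; lra.
  - move=> H0; apply/F0; case: (boolP (inL L1 u w)) => H1.
      by rewrite Pv ?H0 ?H1 //; lra.
    have := re_s1 RR H0 H1; lra.
  - move/F1 => H; apply/negPn/negP => N; move: hE; rewrite (negbTE N) orbF => H0.
    have := re_s1 RR H0 N; lra.
  - move=> H1; apply/F1; case: (boolP (inL L0 u w)) => H0.
      by rewrite Pv ?H0 ?H1 //; lra.
    have := re_s2 RR H1 H0; lra.
have FC : forall u w, (0 < mult src dst u w)%nat ->
    {in edges_between src dst u w &, injective kappa} /\ kappa @: edges_between src dst u w = fcols p u w.
  move=> u w m; split.
    move=> e e'; rewrite !in_set => J J' Ek.
    have eT : e \in T (kappa e) by apply/kapP.
    have e'T : e' \in T (kappa e) by apply/kapP; rewrite Ek.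
    exact: (no_parallel lf (trees (kappa e)).2 eT e'T J J').
  apply/setP => i; by rewrite EBk key.
exists p; split.
- move=> x y Exy.
  have E0 := congr1 (fun f => f ord0) Exy; have E1 := congr1 (fun f => f ord_max) Exy.
  move: E0 E1; rewrite /= !pE0 !pE1 => E0 E1.
  apply: (re_inj RR); rewrite ?in_setT //; lra.
- move=> u w m; have [inj img] := FC u w m; by rewrite -img card_in_imset.
- by exists kappa; split => // u w m; exact: FC.
Qed.
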